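(* Let $G=(V,E,w)$ be an undirected graph with edge weights $w:E\to\mathbb{R}^+$, let $s,t\in V$, and let $h:V\to\mathbb{R}$ be a consistent heuristic, i.e. $h(u)\le w(u,v)+h(v)$ for every edge $\{u,v\}\in E$ taken in either orientation. Run the bidirectional stepping search described in the context, using the following pruning rule, where $\mu$ is the current value of the global variable at the time of the check: - a forward copy $v^{+}$ is pruned if and only if $\delta[v^{+}]+h(v)\ge\mu/2$; - a backward copy $v^{-}$ is pruned if and only if $\delta[v^{-}]-h(v)\ge\mu/2$. Then, for every choice of thresholds in the rounds and every interleaving of the parallel atomic operations, if the algorithm terminates (i.e. the frontier becomes empty), the returned value $\mu$ equals the shortest-path distance $d(s,t)$ in $G$.
   Context: Bidirectional stepping search with a pruning rule. For every vertex $v\in V$ there are two copies: $v^{+}$ (search from $s$) and $v^{-}$ (search from $t$). Each copy has a tentative distance $\delta[v^{\pm}]$, initialized to $+\infty$. A global variable $\mu$ is initialized to $+\infty$. Initialization sets $\delta[s^{+}]=0$ and $\delta[t^{-}]=0$, and inserts $s^{+}$ and $t^{-}$ into a set $F$, the frontier. While $F\neq\emptyset$, a round is executed. A real threshold $\theta$ is chosen, and it may depend arbitrarily on the current state; for example, it may be compared against $\delta$ plus the heuristic. An arbitrary nonempty-or-empty subset of $F$ selected by this threshold is removed from $F$. Each removed $u^{\oplus}$ is processed in parallel as follows: - If $u^{\oplus}$ satisfies the pruning rule, nothing is done. - Otherwise, for every neighbor $v$ of $u$, the algorithm performs an atomic write-min $\delta[v^{\oplus}]\leftarrow\min(\delta[v^{\oplus}],\,\delta[u^{\oplus}]+w(u,v))$.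 - If this write-min strictly decreased $\delta[v^{\oplus}]$, the algorithm then atomically sets $\mu\leftarrow\min(\mu,\,\delta[v^{+}]+\delta[v^{-}])$. After that, if $v^{\oplus}$ does not satisfy the pruning rule, $v^{\oplus}$ is inserted into $F$ (if not already present). At termination the algorithm returns $\mu$. Tentative distances only decrease over time. $d(u,v)$ denotes the true shortest-path distance in $G$. *)

(* Defs.v *)
From HB Require Import structures.
From mathcomp Require Import all_boot all_order all_algebra.
From mathcomp Require Import boolp classical_sets reals constructive_ereal ereal.
Set Implicit Arguments. Unset Strict Implicit. Unset Printing Implicit Defensive.
Import Order.TTheory GRing.Theory Num.Theory.
Local Open Scope classical_set_scope.
Local Open Scope ring_scope.

(* Copies of a vertex: (v, true) is the forward copy v^+, (v, false) is the
   backward copy v^-. *)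

Inductive task (V : Type) :=
  | TExpand of V & bool        (* process a removed frontier element u^b      *)
  | TRelax  of V & V & bool    (* atomic write-min along edge u -> v, copy b  *)
  | TMeet   of V & bool        (* atomic mu <- min(mu, d[v+] + d[v-])         *)
  | TInsert of V & bool.       (* pruning check of v^b, then insertion into F *)

Record state (R : realType) (V : finType) := State {
  dl    : V -> bool -> \bar R;     (* tentative distances delta[v^b]  *)
  mu    : \bar R;
  front : {set V * bool};
  pend  : seq (task V)             (* in-flight parallel operations   *)
}.

Section Algo.
Variables (R : realType) (V : finType) (e : rel V) (w : V -> V -> R)
          (h : V -> R) (s t : V).

(* weight of the walk s = x, p_1, ..., p_k *)
Fixpoint pweight (x : V) (p : seq V) : R :=
  if p is y :: q then w x y + pweight y q else 0.

Definition dist (x y : V) : \bar R :=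
  ereal_inf [set (pweight x p)%:E | p in [set p : seq V | path e x p /\ last x p = y]].

Definition pruned (st : state R V) (v : V) (b : bool) : bool :=
  if b then (mu st * (2^-1)%:E <= dl st v true + (h v)%:E)%E
  else (mu st * (2^-1)%:E <= dl st v false - (h v)%:E)%E.

Definition upd (d : V -> bool -> \bar R) (v : V) (b : bool) (x : \bar R) :=
  fun y c => if (y == v) && (c == b) then x else d y c.

Definition init : state R V :=
  State (fun y c => if c then (if y == s then 0%E else +oo%E)
                         else (if y == t then 0%E else +oo%E))
        +oo%E [set (s, true); (t, false)] [::].

Inductive step : state R V -> state R V -> Prop :=
  | StRound st (S : {set V * bool}) :
      pend st = [::] -> front st != finset.set0 -> S \subset front st ->
      step st (State (dl st) (mu st) (front st :\: S)
                     [seq TExpand x.1 x.2 | x <- enum S])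
  | StExpand st p1 p2 u b :
      pend st = p1 ++ TExpand u b :: p2 ->
      step st (State (dl st) (mu st) (front st)
                 (p1 ++ (if pruned st u b then [::]
                         else [seq TRelax u v b | v <- enum (e u)]) ++ p2))
  | StRelaxDec st p1 p2 u v b :
      pend st = p1 ++ TRelax u v b :: p2 ->
      (dl st u b + (w u v)%:E < dl st v b)%E ->
      step st (State (upd (dl st) v b (dl st u b + (w u v)%:E)%E) (mu st)
                     (front st) (p1 ++ TMeet v b :: p2))
  | StRelaxNo st p1 p2 u v b :
      pend st = p1 ++ TRelax u v b :: p2 ->
      ~~ (dl st u b + (w u v)%:E < dl st v b)%E ->
      step st (State (dl st) (mu st) (front st) (p1 ++ p2))
  | StMeet st p1 p2 v b :
      pend st = p1 ++ TMeet v b :: p2 ->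
      step st (State (dl st) (Order.min (mu st) (dl st v true + dl st v false)%E)
                     (front st) (p1 ++ TInsert v b :: p2))
  | StInsert st p1 p2 v b :
      pend st = p1 ++ TInsert v b :: p2 ->
      step st (State (dl st) (mu st)
                     (if pruned st v b then front st else (v, b) |: front st)
                     (p1 ++ p2)).

Inductive reachable : state R V -> Prop :=
  | ReachInit : reachable init
  | ReachStep st st' : reachable st -> step st st' -> reachable st'.

End Algo.

(* Main.v *)
Require Import Defs.
From HB Require Import structures.
From mathcomp Require Import all_boot all_order all_algebra.
From mathcomp Require Import boolp classical_sets reals constructive_ereal ereal.
From mathcomp Require Import lra.
Set Implicit Arguments. Unset Strict Implicit. Unset Printing Implicit Defensive.
Import Order.TTheory GRing.Theory Num.Theory.
Local Open Scope ring_scope.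
Section Final.
Variables (R : realType) (V : finType) (e : rel V) (w : V -> V -> R) (h : V -> R) (s t : V).
Hypothesis esym : symmetric e.
Hypothesis wsym : forall u v, e u v -> w u v = w v u.
Hypothesis hcons : forall u v, e u v -> h u <= w u v + h v.
Local Open Scope ereal_scope.

Lemma comb (m : \bar R) (a b : R) : m * (2^-1)%:E <= a%:E -> m * (2^-1)%:E <= b%:E -> m <= (a + b)%:E.
Proof.
case: m => [r||] //=.
- rewrite -EFinM !lee_fin => H1 H2; lra.
- rewrite mulyr gtr0_sg ?mul1e //; by rewrite invr_gt0.
- by rewrite leNye.
Qed.

Variables (d : V -> bool -> \bar R) (m : \bar R).
Hypothesis H1 : forall u b, (if b then m * (2^-1)%:E <= d u true + (h u)%:E
                     else m * (2^-1)%:E <= d u false - (h u)%:E)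
                  \/ (forall v, e u v -> d v b <= d u b + (w u v)%:E).
Hypothesis H2 : forall v, m <= d v true + d v false.
Hypothesis Hs : d s true <= 0.
Hypothesis Ht : d t false <= 0.

Lemma backward q : forall y, path e y q -> last y q = t ->
  d y false <= (pweight w y q)%:E \/ m * (2^-1)%:E <= (pweight w y q - h y)%:E.
Proof.
elim: q => [|z q IH] y /=.
  by move=> _ ->; left.
move=> /andP[eyz pz] lz.
have hy := hcons eyz.
case: (IH z pz lz) => [Rz|Pz].
- case: (H1 z false) => [Pr|Cl].
  + right; apply: (le_trans Pr); apply: (le_trans (leeD2r _ Rz)).
    rewrite -EFinB lee_fin; lra.
  + left; have := Cl y; rewrite -esym => /(_ eyz) Hy.
    apply: (le_trans Hy); apply: (le_trans (leeD2r _ Rz)).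
    rewrite -EFinD lee_fin (wsym eyz); lra.
- right; apply: (le_trans Pz); rewrite lee_fin; lra.
Qed.

Lemma forward q : forall y g, path e y q -> last y q = t -> d y true <= g%:E ->
  m <= (g + pweight w y q)%:E.
Proof.
elim: q => [|z q IH] y g /=.
- move=> _ -> Hg; apply: (le_trans (H2 t)).
  rewrite addr0 -(adde0 g%:E); exact: leeD.
- move=> /andP[eyz pz] lz Hg.
  case: (H1 y true) => [Pr|Cl].
  + have Pr' : m * (2^-1)%:E <= (g + h y)%:E.
      by apply: (le_trans Pr); rewrite EFinD; exact: leeD2r.
    have := backward (y := y) (q := z :: q); rewrite /= eyz pz => /(_ isT lz) [Rb|Pb].
    * apply: (le_trans (H2 y)); rewrite EFinD; exact: leeD.
    * have := comb Pr' Pb; congr (_ <= _%:E); lra.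
  + have Hz : d z true <= (g + w y z)%:E.
      by apply: (le_trans (Cl z eyz)); rewrite EFinD; exact: leeD2r.
    by have := IH z _ pz lz Hz; rewrite addrA.
Qed.
End Final.
Section Inv.
Variables (R : realType) (V : finType) (e : rel V) (w : V -> V -> R) (h : V -> R) (s t : V).
Hypothesis esym : symmetric e.
Hypothesis wsym : forall u v, e u v -> w u v = w v u.
Hypothesis wpos : forall u v, e u v -> 0 < w u v.
Hypothesis st_neq : s != t.
Local Open Scope ereal_scope.

Lemma in_catT (T : Type) (x : T) (l1 l2 : seq T) :
  List.In x (l1 ++ l2) <-> List.In x l1 \/ List.In x l2.
Proof. elim: l1 => [|a l IH] /=; [tauto|]; rewrite IH; tauto. Qed.

Lemma inR (T : Type) (x y : T) p1 p2 : List.In x (p1 ++ y :: p2) -> x = y \/ List.In x (p1 ++ p2).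
Proof. rewrite !in_catT /=; intuition. Qed.

Lemma inA (T : Type) (x : T) l p1 p2 : List.In x (p1 ++ p2) -> List.In x (p1 ++ l ++ p2).
Proof. rewrite !in_catT; tauto. Qed.

Lemma inA1 (T : Type) (x y : T) p1 p2 : List.In x (p1 ++ p2) -> List.In x (p1 ++ y :: p2).
Proof. rewrite !in_catT /=; tauto. Qed.

Lemma inM (T : Type) (x : T) l p1 p2 : List.In x l -> List.In x (p1 ++ l ++ p2).
Proof. rewrite !in_catT; tauto. Qed.

Lemma inM1 (T : Type) (x : T) p1 p2 : List.In x (p1 ++ x :: p2).
Proof. rewrite !in_catT /=; tauto. Qed.

Lemma in_mapT (A B : Type) (f : A -> B) (x : B) l : List.In x (map f l) -> exists y, x = f y /\ List.In y l.
Proof. elim: l => [|a l IH] //= [<-|/IH [y [-> Hy]]]; [exists a|exists y]; tauto. Qed.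

Lemma map_inT (A B : Type) (f : A -> B) y l : List.In y l -> List.In (f y) (map f l).
Proof. elim: l => [|a l IH] //= [->|/IH]; tauto. Qed.

Lemma In_mem (T : eqType) (x : T) (l : seq T) : List.In x l <-> x \in l.
Proof.
elim: l => [|a l IH] //=; rewrite in_cons IH; split.
- by case=> [->|->]; rewrite ?eqxx ?orbT.
- by case/orP=> [/eqP->|]; tauto.
Qed.

Lemma pweight_cat x p q : pweight w x (p ++ q) = (pweight w x p + pweight w (last x p) q)%R.
Proof. elim: p x => [|y p IH] x /=; first by rewrite add0r. by rewrite IH addrA. Qed.

Definition I1 (st : state R V) := forall u b,
  (u, b) \in front st \/ List.In (TExpand u b) (pend st) \/ List.In (TMeet u b) (pend st)
  \/ List.In (TInsert u b) (pend st) \/ pruned h st u b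
  \/ (forall v, e u v -> dl st v b <= dl st u b + (w u v)%:E \/ List.In (TRelax u v b) (pend st)).
Definition I2 (st : state R V) := forall v,
  mu st <= dl st v true + dl st v false \/ exists b, List.In (TMeet v b) (pend st).
Definition I3 (st : state R V) := forall v, dl st v true = +oo \/
  exists p, [/\ path e s p, last s p = v & dl st v true = (pweight w s p)%:E].
Definition I4 (st : state R V) := forall v, dl st v false = +oo \/
  exists p, [/\ path e v p, last v p = t & dl st v false = (pweight w v p)%:E].
Definition I5 (st : state R V) := dist e w s t <= mu st.
Definition I6 (st : state R V) := dl st s true <= 0 /\ dl st t false <= 0.
Definition I7 (st : state R V) := forall u v b, List.In (TRelax u v b) (pend st) -> e u v.

Lemma pruned_mono (st st' : state R V) u b : mu st' <= mu st -> dl st' u b = dl st u b ->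
  pruned h st u b -> pruned h st' u b.
Proof.
move=> Hm Hd.
have Hm2 : mu st' * (2^-1)%:E <= mu st * (2^-1)%:E.
  by apply: lee_wpmul2r => //; rewrite lee_fin invr_ge0.
by case: b Hd => Hd; rewrite /pruned Hd => /(le_trans Hm2).
Qed.

Lemma upd_le (d : V -> bool -> \bar R) v b x : x < d v b -> forall y c, upd d v b x y c <= d y c.
Proof.
move=> Hx y c; rewrite /upd; case: ifP => // /andP[/eqP-> /eqP->]; exact: ltW.
Qed.

Lemma upd_neq (d : V -> bool -> \bar R) v b x y c : ~~ ((y == v) && (c == b)) -> upd d v b x y c = d y c.
Proof. by rewrite /upd => /negbTE->. Qed.

Lemma upd_eq (d : V -> bool -> \bar R) v b x : upd d v b x v b = x.
Proof. by rewrite /upd !eqxx. Qed.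

Ltac inv_disc H := case: (inR H) => [//|{}H].

Lemma step_I7 st st' : step e w h st st' -> I7 st -> I7 st'.
Proof.
case=> {st st'} st.
- move=> S Hp _ _ H7 u v b /= H; case: (in_mapT H) => x [] //.
- move=> p1 p2 u b Hp H7 x y c /=; rewrite in_catT in_catT => -[H|[H|H]].
  + by apply: (H7 x y c); rewrite Hp in_catT; left.
  + case: ifP H => _ //= H; case: (in_mapT H) => z [[-> -> _]]; rewrite In_mem mem_enum.
    by rewrite unfold_in.
  + by apply: (H7 x y c); rewrite Hp in_catT /=; tauto.
- move=> p1 p2 u v b Hp _ H7 x y c /= H; inv_disc H; apply: (H7 x y c); rewrite Hp; exact: inA1.
- move=> p1 p2 u v b Hp _ H7 x y c /= H; apply: (H7 x y c); rewrite Hp; exact: inA1.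
- move=> p1 p2 v b Hp H7 x y c /= H; inv_disc H; apply: (H7 x y c); rewrite Hp; exact: inA1.
- move=> p1 p2 v b Hp H7 x y c /= H; apply: (H7 x y c); rewrite Hp; exact: inA1.
Qed.

Lemma step_I6 st st' : step e w h st st' -> I6 st -> I6 st'.
Proof.
case=> {st st'} st //.
move=> p1 p2 u v b Hp Hlt [H1 H2] /=; split.
- exact: le_trans (upd_le Hlt _ _) H1.
- exact: le_trans (upd_le Hlt _ _) H2.
Qed.

Lemma step_I2 st st' : step e w h st st' -> I2 st -> I2 st'.
Proof.
case=> {st st'} st.
- move=> S Hp _ _ H2 v /=; case: (H2 v) => [H|[b]]; [by left|by rewrite Hp].
- move=> p1 p2 u b Hp H2 v /=; case: (H2 v) => [H|[c H]]; first by left.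
  rewrite Hp in H; inv_disc H; right; exists c; exact: inA.
- move=> p1 p2 u v b Hp Hlt H2 y /=.
  case: (eqVneq y v) => [->|yv]; first by right; exists b; exact: inM1.
  rewrite !upd_neq ?(negbTE yv) //.
  case: (H2 y) => [H|[c H]]; first by left.
  rewrite Hp in H; inv_disc H; right; exists c; exact: inA1.
- move=> p1 p2 u v b Hp Hlt H2 y /=.
  case: (H2 y) => [H|[c H]]; first by left.
  rewrite Hp in H; inv_disc H; right; exists c; exact: H.
- move=> p1 p2 v b Hp H2 y /=.
  case: (eqVneq y v) => [->|yv]; first by left; rewrite ge_min lexx orbT.
  case: (H2 y) => [H|[c H]].
    by left; rewrite ge_min H.
  rewrite Hp in H; case: (inR H) => [[yv']|{}H]; first by rewrite yv' eqxx in yv.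
  right; exists c; exact: inA1.
- move=> p1 p2 v b Hp H2 y /=.
  case: (H2 y) => [H|[c H]]; first by left.
  rewrite Hp in H; inv_disc H; right; exists c; exact: H.
Qed.

Lemma relax_fin (d : V -> bool -> \bar R) u v b x : d u b + x%:E < d v b ->
  d u b = +oo -> False.
Proof. by move=> H Hu; move: H; rewrite Hu addye // ltNge leey. Qed.

Lemma step_I3 st st' : step e w h st st' -> I7 st -> I3 st -> I3 st'.
Proof.
case=> {st st'} st //.
move=> p1 p2 u v b Hp Hlt H7 H3 y /=.
have euv : e u v by apply: (H7 u v b); rewrite Hp; exact: inM1.
case: (boolP ((y == v) && (true == b))) => [/andP[/eqP-> /eqP Hb]|Hn]; last first.
  by rewrite upd_neq //; exact: H3.
subst b; rewrite upd_eq; right.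
case: (H3 u) => [Hu|[p [pp lp dp]]]; first by case: (relax_fin Hlt Hu).
exists (p ++ [:: v]); split.
- by rewrite cat_path pp lp /= euv.
- by rewrite last_cat lp.
- by rewrite dp pweight_cat lp /= addr0.
Qed.

Lemma step_I4 st st' : step e w h st st' -> I7 st -> I4 st -> I4 st'.
Proof.
case=> {st st'} st //.
move=> p1 p2 u v b Hp Hlt H7 H4 y /=.
have euv : e u v by apply: (H7 u v b); rewrite Hp; exact: inM1.
case: (boolP ((y == v) && (false == b))) => [/andP[/eqP-> /eqP Hb]|Hn]; last first.
  by rewrite upd_neq //; exact: H4.
subst b; rewrite upd_eq; right.
case: (H4 u) => [Hu|[p [pp lp dp]]]; first by case: (relax_fin Hlt Hu).
exists (u :: p); split.
- by rewrite /= esym euv pp.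
- by rewrite /= lp.
- by rewrite dp /= (wsym euv) addrC.
Qed.

Lemma step_I5 st st' : step e w h st st' -> I3 st -> I4 st -> I5 st -> I5 st'.
Proof.
case=> {st st'} st //.
move=> p1 p2 v b Hp H3 H4 H5; rewrite /I5 /= le_min; rewrite /I5 in H5; rewrite H5 /=.
case: (H3 v) => [->|[p [pp lp dp]]].
  by case: (H4 v) => [->|[q [_ _ ->]]]; rewrite ?addye // leey.
case: (H4 v) => [->|[q [pq lq dq]]].
  by rewrite dp addey // leey.
rewrite dp dq; apply: ereal_inf_lbound; exists (p ++ q).
  by split; [rewrite cat_path pp lp pq | rewrite last_cat lp lq].
by rewrite pweight_cat lp EFinD.
Qed.

Lemma step_I1 st st' : step e w h st st' -> I1 st -> I1 st'.
Proof.
case=> {st st'} st.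
-
  move=> S Hp _ _ H1 u b /=; rewrite /I1 Hp in H1.
  case: (H1 u b) => [Hf|[//|[//|[//|[Hpr|Hn]]]]].
  + case: (boolP ((u, b) \in S)) => HS.
      right; left; apply: (map_inT (fun x : V * bool => TExpand x.1 x.2) (y := (u, b))).
      by rewrite In_mem mem_enum.
    by left; rewrite finset.in_setD HS Hf.
  + by (do 4 right); left.
  + (do 5 right) => v euv; left; by case: (Hn v euv).
-
  move=> p1 p2 u b Hp H1 x c /=; rewrite /I1 Hp in H1.
  case: (H1 x c) => [Hf|[H|[H|[H|[Hpr|Hn]]]]].
  + by left.
  + case: (inR H) => [[-> ->]|{}H]; last by right; left; exact: inA.
    case: (boolP (pruned h st u b)) => Hpr; first by (do 4 right); left.
    (do 5 right) => v euv; right; apply: inM.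
    apply: (map_inT (TRelax u ^~ b)); by rewrite In_mem mem_enum unfold_in.
  + by inv_disc H; (do 2 right); left; exact: inA.
  + by inv_disc H; (do 3 right); left; exact: inA.
  + by (do 4 right); left.
  + (do 5 right) => v euv; case: (Hn v euv) => [?|H]; [by left|right].
    by inv_disc H; exact: inA.
-
  move=> p1 p2 u v b Hp Hlt H1 x c /=; rewrite /I1 Hp in H1.
  case: (boolP ((x == v) && (c == b))) => [/andP[/eqP-> /eqP->]|Hxc].
    by (do 2 right); left; exact: inM1.
  have Hdx : upd (dl st) v b (dl st u b + (w u v)%:E) x c = dl st x c by rewrite upd_neq.
  case: (H1 x c) => [Hf|[H|[H|[H|[Hpr|Hn]]]]].
  + by left.
  + by inv_disc H; right; left; exact: inA1.
  + by inv_disc H; (do 2 right); left; exact: inA1.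
  + by inv_disc H; (do 3 right); left; exact: inA1.
  + by (do 4 right); left; apply: pruned_mono Hpr.
  + (do 5 right) => y exy; rewrite Hdx.
    case: (Hn y exy) => [Hy|H].
      by left; exact: le_trans (upd_le Hlt _ _) Hy.
    case: (inR H) => [[Hxu Hyv Hcb]|{}H]; last by right; exact: inA1.
    subst x y c; left; rewrite upd_eq; exact: lexx.
-
  move=> p1 p2 u v b Hp Hlt H1 x c /=; rewrite /I1 Hp in H1.
  case: (H1 x c) => [Hf|[H|[H|[H|[Hpr|Hn]]]]].
  + by left.
  + by inv_disc H; right; left.
  + by inv_disc H; (do 2 right); left.
  + by inv_disc H; (do 3 right); left.
  + by (do 4 right); left.
  + (do 5 right) => y exy.
    case: (Hn y exy) => [Hy|H]; first by left.
    case: (inR H) => [[Hxu Hyv Hcb]|{}H]; last by right.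
    by subst x y c; left; rewrite leNgt.
-
  move=> p1 p2 v b Hp H1 x c /=; rewrite /I1 Hp in H1.
  case: (H1 x c) => [Hf|[H|[H|[H|[Hpr|Hn]]]]].
  + by left.
  + by inv_disc H; right; left; exact: inA1.
  + case: (inR H) => [[-> ->]|{}H]; first by (do 3 right); left; exact: inM1.
    by (do 2 right); left; exact: inA1.
  + by inv_disc H; (do 3 right); left; exact: inA1.
  + (do 4 right); left; apply: pruned_mono Hpr => //=.
    by rewrite ge_min lexx.
  + (do 5 right) => y exy; case: (Hn y exy) => [?|H]; [by left|right].
    by inv_disc H; exact: inA1.
-
  move=> p1 p2 v b Hp H1 x c /=; rewrite /I1 Hp in H1.
  case: (H1 x c) => [Hf|[H|[H|[H|[Hpr|Hn]]]]].
  + by left; case: ifP => // _; exact: setU1r.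
  + by inv_disc H; right; left.
  + by inv_disc H; (do 2 right); left.
  + case: (inR H) => [[-> ->]|{}H]; last by (do 3 right); left.
    case: (boolP (pruned h st v b)) => Hpr; first by (do 4 right); left.
    by left; rewrite in_setU1 eqxx.
  + by (do 4 right); left.
  + (do 5 right) => y exy; case: (Hn y exy) => [?|H]; [by left|right].
    by inv_disc H.
Qed.

Definition Inv st := I1 st /\ I2 st /\ I3 st /\ I4 st /\ I5 st /\ I6 st /\ I7 st.

Lemma init_inv : Inv (init R s t).
Proof.
split; [|split; [|split; [|split; [|split; [|split]]]]] => //.
- move=> u b /=; rewrite !inE.
  case: b.
  + case: (eqVneq u s) => [->|us]; first by left; rewrite eqxx.
    (do 5 right); move=> v _; left; by rewrite addye // leey.
  + case: (eqVneq u t) => [->|ut]; first by left; rewrite eqxx orbT.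
    (do 5 right); move=> v _; left; by rewrite addye // leey.
- move=> v; left => /=; case: ifP => [/eqP vs|_]; case: ifP => [/eqP vt|_].
  + by move: st_neq; rewrite -vs -vt eqxx.
  + by rewrite add0e.
  + by rewrite adde0.
  + by rewrite addye.
- move=> v /=; case: (eqVneq v s) => [->|_]; [right; exists [::] | by left]; by split.
- move=> v /=; case: (eqVneq v t) => [->|_]; [right; exists [::] | by left]; by split.
- exact: leey.
- by rewrite /I6 /= !eqxx.
Qed.

Lemma reach_inv st : reachable e w h s t st -> Inv st.
Proof.
elim=> [|st0 st1 _ [H1 [H2 [H3 [H4 [H5 [H6 H7]]]]]] Hs]; first exact: init_inv.
split; [|split; [|split; [|split; [|split; [|split]]]]]; [exact: step_I1 Hs H1|exact: step_I2 Hs H2|exact: step_I3 Hs H7 H3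
  |exact: step_I4 Hs H7 H4|exact: step_I5 Hs H3 H4 H5|exact: step_I6 Hs H6|exact: step_I7 Hs H7].
Qed.
End Inv.

Theorem theorem3p3 (R : realType) (V : finType) (e : rel V)
    (w : V -> V -> R) (h : V -> R) (s t : V) :
  symmetric e ->
  (forall u v, e u v -> w u v = w v u) ->
  (forall u v, e u v -> 0 < w u v) ->
  (forall u v, e u v -> h u <= w u v + h v) ->
  s != t ->
  forall st : state R V, reachable e w h s t st ->
    front st = finset.set0 -> pend st = [::] ->
    mu st = dist e w s t.
Proof.
move=> esym wsym wpos hcons st_neq st Hr Hf Hp.
have [H1 [H2 [H3 [H4 [H5 [H6 H7]]]]]] := reach_inv esym wsym st_neq Hr.
rewrite /I1 Hf Hp in H1; rewrite /I2 Hp in H2; rewrite /I5 in H5; rewrite /I6 in H6.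
have HH1 : forall u b, (if b then (mu st * (2^-1)%:E <= dl st u true + (h u)%:E)%E
     else (mu st * (2^-1)%:E <= dl st u false - (h u)%:E)%E) \/
    (forall v, e u v -> (dl st v b <= dl st u b + (w u v)%:E)%E).
  move=> u b; case: (H1 u b) => [|[//|[//|[//|[Hpr|Hn]]]]].
  - by rewrite finset.in_set0.
  - by left; case: b Hpr.
  - by right => v euv; case: (Hn v euv).
have HH2 : forall v, (mu st <= dl st v true + dl st v false)%E.
  by move=> v; case: (H2 v) => // -[].
apply/eqP; rewrite eq_le H5 andbT.
apply: le_ereal_inf_tmp => _ [p [pp lp] <-].
have := forward esym wsym hcons HH1 HH2 H6.2 pp lp (g := 0) H6.1.
by rewrite add0r.
Qed.
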